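(* Let $G$ be a connected bipartite graph with color classes $E$ and $V$, $\Gamma$ a spanning tree of $G$ inducing the hypertree $\mathbf f$ of $(V,E)$, and $\mathbf f^+=\mathbf f+\frac1{|E|}\mathbf i_E\in\mathbf R^E$. For each $v\in V$ and each edge $\varepsilon$ of $\Gamma$ adjacent to $v$, let $E_{v,\varepsilon}$ be the set of elements of $E$ whose path in $\Gamma$ from $v$ starts with $\varepsilon$, and set $w(\varepsilon)=|E_{v,\varepsilon}|/|E|$ (each edge has a unique endpoint in $V$, so $w$ is well defined on edges of $\Gamma$). Then for each $v$ the weights $w(\varepsilon)$ over edges $\varepsilon$ of $\Gamma$ at $v$ are non-negative and sum to $1$, so $\sum_{v\in V}\sum_{\varepsilon\ni v}w(\varepsilon)\,\mathbf i_{\{e_\varepsilon\}}$ is a point of the Minkowski cell $M_\Gamma$, and this point equals $\mathbf f^+$; that is, these weights are the barycentric coordinates (in the direct sum decomposition of $M_\Gamma$) of $\mathbf f^+$.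
   Context: A hypertree induced by a spanning tree $\Gamma$ is the function $\mathbf f\colon E\to\mathbf N$ with $\mathbf f(e)+1$ equal to the degree of $e$ in $\Gamma$. $\mathbf i_S$ is the indicator vector of $S$. For $v\in V$, $\Delta^\Gamma_v=\operatorname{conv}\{\mathbf i_{\{e\}}\mid ev\text{ an edge of }\Gamma\}\subset\mathbf R^E$, and $M_\Gamma=\sum_{v\in V}\Delta^\Gamma_v$ (Minkowski sum), which is a direct sum: each point has a unique representation as a sum of one point from each $\Delta^\Gamma_v$. A point of $\Delta^\Gamma_v$ is described by barycentric weights on the edges of $\Gamma$ at $v$; $e_\varepsilon\in E$ denotes the endpoint of $\varepsilon$ in $E$. *)

(* Defs.v *)
From mathcomp Require Import all_boot all_order all_algebra.
Set Implicit Arguments. Unset Strict Implicit. Unset Printing Implicit Defensive.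
Import Order.TTheory GRing.Theory Num.Theory.

(* A bipartite graph with colour classes E and V is given by its edge set,
   a set of pairs (e, v) : E * V.  Its vertices are E + V. *)

Section BipGraph.
Variables (E V : finType).

Definition badj (H : {set E * V}) : rel (E + V) :=
  fun x y => match x, y with
             | inl e, inr v => (e, v) \in H
             | inr v, inl e => (e, v) \in H
             | _, _ => false
             end.

Definition bconnected (H : {set E * V}) : Prop :=
  forall x y : E + V, connect (badj H) x y.

Definition has_cycle (H : {set E * V}) : Prop :=
  exists (x : E + V) (p : seq (E + V)),
    [/\ uniq (x :: p), 2 <= size p, path (badj H) x p & badj H (last x p) x].

Definition spanning_tree (G Gamma : {set E * V}) : Prop :=
  [/\ Gamma \subset G, bconnected Gamma & ~ has_cycle Gamma].

Definition degE (Gamma : {set E * V}) (e : E) : nat := #|[set v | (e, v) \in Gamma]|.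

(* hypertree induced by Gamma: f(e) + 1 = deg_Gamma(e) *)
Definition hypertree_of (Gamma : {set E * V}) (e : E) : nat := (degE Gamma e).-1.

(* S is E_{v,eps} for eps = (e0, v): the set of e in E such that the path
   in Gamma from v to e starts with the edge eps (i.e. its first step is to e0). *)
Definition path_start_set (Gamma : {set E * V}) (v : V) (e0 : E) (S : {set E}) : Prop :=
  forall e : E, e \in S <->
    exists p : seq (E + V),
      [/\ uniq (inr v :: p), path (badj Gamma) (inr v) p,
          head (inr v) p = inl e0 & last (inr v) p = inl e].

End BipGraph.

(* Main.v *)
Require Import Defs.
From mathcomp Require Import all_boot all_order all_algebra.
From mathcomp Require Import ring.
From Stdlib Require Import FunctionalExtensionality.
Set Implicit Arguments. Unset Strict Implicit. Unset Printing Implicit Defensive.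
Import Order.TTheory GRing.Theory Num.Theory.

Section TwoPaths.
Variables (T : eqType) (e : rel T) (esym : symmetric e).

Lemma two_paths x p q : uniq (x :: p) -> uniq (x :: q) -> path e x p -> path e x q ->
  p != [::] -> q != [::] -> last x p = last x q -> head x p != head x q ->
  exists c, [/\ uniq (x :: c), 1 < size c, path e x c & e (last x c) x].
Proof.
move=> up uq pp pq np nq el hne.
have yp : last x p \in p by case: p np {up pp el hne} => // a s _ /=; exact: mem_last.
have yq : last x q \in q by case: q nq {uq pq el hne} => // a s _ /=; exact: mem_last.
have hasp : has (mem q) p by apply/hasP; exists (last x p) => //; rewrite el.
set i := find (mem q) p.
have ilt : i < size p by rewrite -has_find.
set z := nth x p i.
have zq : z \in q by exact: (nth_find x hasp).
set j := index z q.
have jlt : j < size q by rewrite index_mem.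
have tp : take i.+1 p = rcons (take i p) z by rewrite (take_nth x ilt).
have tq : take j.+1 q = rcons (take j q) z by rewrite (take_nth x jlt) nth_index.
exists (take i.+1 p ++ rev (take j q)).
have pc : path e x (rcons (take i.+1 p ++ rev (take j q)) x).
  rewrite rcons_cat cat_path; apply/andP; split; first exact: take_path.
  rewrite tp last_rcons.
  have := take_path j.+1 pq; rewrite tq -rev_path last_rcons belast_rcons rev_cons.
  by rewrite (@eq_path _ _ e) // => a b; rewrite esym.
move: pc; rewrite rcons_path => /andP [pc ec].
split => //.
- rewrite -cat_cons cat_uniq; apply/and3P; split.
  + have := take_uniq i.+2 up; by [].
  + apply/hasP => -[t]; rewrite mem_rev => tj.
    have tq' : t \in q by exact: (mem_take tj).
    rewrite inE => /orP [/eqP tx | ].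
      by move: uq; rewrite /= -tx tq'.
    rewrite tp mem_rcons inE => /orP [/eqP tz | ti].
      by move: tj; rewrite tz in_take // ltnn.
    have : has (mem q) (take i p) by apply/hasP; exists t.
    by rewrite has_take // ltnn.
  + by rewrite rev_uniq; apply: take_uniq; case/andP: uq.
- rewrite size_cat size_rev !size_takel ?(ltnW jlt) //.
  rewrite addSn ltnS lt0n; apply/negP => /eqP /eqP; rewrite addn_eq0 => /andP [/eqP i0 /eqP j0].
  have h1 : nth x q j = z := nth_index x zq.
  have h2 : nth x p i = z by [].
  move: h1 h2; rewrite i0 j0 !nth0 => h1 h2.
  by move/eqP: hne; apply; rewrite h1 h2.
Qed.
End TwoPaths.

Section Tree.
Variables (E V : finType) (Gamma : {set E * V}).
Hypothesis conn : bconnected Gamma.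
Hypothesis acyc : ~ has_cycle Gamma.

Lemma badj_sym : symmetric (badj Gamma).
Proof. by case=> [a|a] [b|b]. Qed.

Lemma heads_eq x p q : uniq (x :: p) -> uniq (x :: q) -> path (badj Gamma) x p ->
  path (badj Gamma) x q -> p != [::] -> q != [::] -> last x p = last x q ->
  head x p = head x q.
Proof.
move=> up uq pp pq np nq el; apply/eqP/negPn/negP => hne; apply: acyc.
have [c [uc sc pc ec]] := two_paths badj_sym up uq pp pq np nq el hne.
by exists x, c; split.
Qed.

Lemma upath x y : exists p, [/\ uniq (x :: p), path (badj Gamma) x p & last x p = y].
Proof.
have /connectP [p pp ->] := conn x y.
case: (shortenP pp) => p' pp' up' _; by exists p'.
Qed.

Lemma head_r v p : path (badj Gamma) (inr v) p -> p != [::] ->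
  exists e0, head (inr v) p = inl e0 /\ (e0, v) \in Gamma.
Proof. by case: p => [|[e0|v'] s] //= /andP [h _] _; exists e0. Qed.

Lemma head_l e p : path (badj Gamma) (inl e) p -> p != [::] ->
  exists v, head (inl e) p = inr v /\ (e, v) \in Gamma.
Proof. by case: p => [|[e0|v'] s] //= /andP [h _] _; exists v'. Qed.

End Tree.

Lemma sum_one (I : finType) (P Q : pred I) i0 : P i0 -> Q i0 ->
  (forall i, P i -> Q i -> i = i0) -> (\sum_(i | P i) (Q i : nat) = 1)%N.
Proof.
move=> P0 Q0 H; rewrite (bigD1 i0) //= Q0 big1 // => i /andP [Pi ne].
case Qi: (Q i) => //; by rewrite (H i Pi Qi) eqxx in ne.
Qed.

Lemma card_sumb (T : finType) (A : {set T}) : #|A| = (\sum_(t : T) (t \in A : nat))%N.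
Proof. by rewrite -sum1_card big_mkcond; apply: eq_bigr => i _; case: (i \in A). Qed.

Local Open Scope ring_scope.

Theorem lemma3p13 (R : realFieldType) (E V : finType) (G Gamma : {set E * V})
  (Es : V -> E -> {set E}) :
  (0 < #|E|)%N -> (0 < #|V|)%N ->
  bconnected G ->
  spanning_tree G Gamma ->
  (forall v e0, (e0, v) \in Gamma -> path_start_set Gamma v e0 (Es v e0)) ->
  let w (eps : E * V) : R := (#|Es eps.2 eps.1|)%:R / (#|E|)%:R in
  let fplus (e : E) : R := (hypertree_of Gamma e)%:R + 1 / (#|E|)%:R in
  (forall v : V,
     (forall e, (e, v) \in Gamma -> 0 <= w (e, v)) /\
     \sum_(e | (e, v) \in Gamma) w (e, v) = 1) /\
  (fun e' : E => \sum_(v : V) \sum_(e | (e, v) \in Gamma)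
                    w (e, v) * (e == e')%:R) = fplus.
Proof.
move=> E0 V0 _ [_ conn acyc] HEs w fplus.
have N1 v e : exists e0, (e0, v) \in Gamma /\ e \in Es v e0.
  have [p [up pp lp]] := upath conn (inr v) (inl e).
  have np : p != [::] by case: p lp {up pp} => [|a s] // [].
  have [e0 [hp g0]] := head_r pp np.
  exists e0; split => //; apply/(HEs _ _ g0); by exists p.
have U1 v e e0 e1 : (e0, v) \in Gamma -> (e1, v) \in Gamma ->
    e \in Es v e0 -> e \in Es v e1 -> e0 = e1.
  move=> g0 g1 h0 h1.
  have [p [up pp hp lp]] := (HEs _ _ g0 e).1 h0.
  have [q [uq pq hq lq]] := (HEs _ _ g1 e).1 h1.
  have np : p != [::] by case: p hp {up pp lp} => [|a s] // [].
  have nq : q != [::] by case: q hq {uq pq lq} => [|a s] // [].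
  have := heads_eq acyc up uq pp pq np nq (etrans lp (esym lq)).
  by rewrite hp hq => -[].
have C1 v : (\sum_(e0 | (e0, v) \in Gamma) #|Es v e0| = #|E|)%N.
  under eq_bigr do rewrite card_sumb.
  rewrite (exchange_big_dep predT) //=.
  rewrite (eq_bigr (fun _ => 1%N)) ?sum1_card // => e _.
  under eq_bigl do rewrite andbT.
  have [e0 [g0 m0]] := N1 v e.
  apply: (sum_one (i0 := e0)) => // e1 g1 m1.
  exact: (U1 v e e1 e0).
have K e' : (0 < degE Gamma e')%N.
  have [v0 _] : exists v0 : V, true by case/card_gt0P: V0 => v0; exists v0.
  have [p [up pp lp]] := upath conn (inl e') (inr v0).
  have np : p != [::] by case: p lp {up pp} => [|a s] // [].
  have [v [_ g]] := head_l pp np.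
  by rewrite /degE; apply/card_gt0P; exists v; rewrite inE.
have C2 e' : (\sum_(v | (e', v) \in Gamma) #|Es v e'| + #|E| = degE Gamma e' * #|E| + 1)%N.
  set k := degE Gamma e'.
  have kS : k = (\sum_(v | (e', v) \in Gamma) 1)%N.
    by rewrite /k /degE -sum1_card; apply: eq_bigl => v; rewrite inE.
  have ce' : (\sum_(v | (e', v) \in Gamma) (e' \in Es v e' : nat) = k)%N.
    rewrite kS; apply: eq_bigr => v g.
    have -> : e' \in Es v e' by apply/(HEs _ _ g); exists [:: inl e']; split => //=; rewrite g.
    by [].
  have ce e : e != e' -> (\sum_(v | (e', v) \in Gamma) (e \in Es v e' : nat) + 1 = k)%N.
    move=> ne.
    have [P [uP pP lP]] := upath conn (inl e') (inl e).
    have nP : P != [::].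
      case: P lP {uP pP} => // [[eq]]; by rewrite eq eqxx in ne.
    have [vs [hP gs]] := head_l pP nP.
    case: P uP pP lP nP hP => [|a P'] // uP pP lP _ /= hP; subst a.
    have notin : e \notin Es vs e'.
      apply/negP => /(HEs _ _ gs) [Q [uQ pQ hQ lQ]].
      have nP' : P' != [::] by case: P' lP {uP pP} => // [[]].
      have nQ : Q != [::] by case: Q hQ {uQ pQ lQ} => [|a s] // [].
      move: (uP) (pP) => /= /andP [uP1 uP2] /andP [_ pP2].
      have := heads_eq acyc uP2 uQ pP2 pQ nP' nQ (etrans lP (esym lQ)).
      rewrite hQ => hh.
      have : inl e' \in P' by case: P' hh {uP uP1 uP2 pP pP2 lP nP'} => //= a s ->; rewrite inE eqxx.
      by move: uP1; rewrite inE negb_or => /andP [_ /negbTE ->].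
    have others v : (e', v) \in Gamma -> v != vs -> e \in Es v e'.
      move=> g nv; case vin: (inr v \in P').
      - exfalso; move/negP: nv; apply; apply/eqP.
        set idx := index (inr v) P'.
        have ilt : (idx < size P')%N by rewrite index_mem.
        have tP : take idx.+1 P' = rcons (take idx P') (inr v).
          by rewrite (take_nth (inr v) ilt) nth_index.
        have u1 : uniq (inl e' :: inr vs :: take idx.+1 P') by have := take_uniq idx.+3 uP.
        have p1 : path (badj Gamma) (inl e') (inr vs :: take idx.+1 P').
          by have := take_path idx.+2 pP.
        have u2 : uniq [:: inl e'; inr v] by [].
        have p2 : path (badj Gamma) (inl e') [:: inr v] by rewrite /= g.
        have := heads_eq acyc u1 u2 p1 p2 isT isT.
        by rewrite /= tP last_rcons => /(_ erefl) [].
      - apply/(HEs _ _ g); exists (inl e' :: inr vs :: P'); split => //=.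
        move: uP; rewrite /= !inE vin /= => /and3P [h1 h2 h3].
        rewrite h1 h2 h3 !andbT orbF; apply: contra nv => /eqP [->]; by [].
        by rewrite g; move: pP => /= /andP [-> ->].
    rewrite kS (bigD1 vs) //= (negbTE notin) add0n.
    rewrite (bigD1 vs gs) /= addnC; congr addn.
    by apply: eq_bigr => v /andP [g nv]; rewrite others.
  under eq_bigr do rewrite card_sumb.
  rewrite (exchange_big_dep predT) //=.
  under eq_bigr do under eq_bigl do rewrite andbT.
  have cE : #|E| = (\sum_(e : E) 1)%N by rewrite sum1_card.
  rewrite [in LHS]cE -big_split /= [in RHS]cE big_distrr /= [in LHS](bigD1 e') //= ce' [in RHS](bigD1 e') //= muln1.
  rewrite (eq_bigr (fun _ => k)); first by rewrite addnAC.
  move=> e ne; exact: ce.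
have n0 : (#|E|%:R : R) != 0 by rewrite pnatr_eq0 -lt0n.
split.
  move=> v; split.
    by move=> e _; rewrite /w divr_ge0 // ler0n.
  by rewrite /w /= -mulr_suml -natr_sum C1 divff.
apply: functional_extensionality => e'.
have inner v : \sum_(e | (e, v) \in Gamma) w (e, v) * (e == e')%:R =
    if (e', v) \in Gamma then w (e', v) else 0.
  rewrite big_mkcond (bigD1 e') //= big1 ?addr0.
    by case: ifP => _; rewrite ?eqxx ?mulr1.
  move=> e ne; case: ifP => _ //; by rewrite (negbTE ne) mulr0.
under eq_bigr do rewrite inner.
rewrite -big_mkcond /= /w /fplus /hypertree_of /= -mulr_suml -natr_sum.
have hS : ((\sum_(v | (e', v) \in Gamma) #|Es v e'|)%:R : R) =
    (degE Gamma e')%:R * #|E|%:R + 1 - #|E|%:R.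
  by apply/(addIr (#|E|%:R)); rewrite subrK -natrD C2 natrD natrM.
rewrite hS; case: (degE Gamma e') (K e') => // k' _ /=.
rewrite -natr1; field.
by [].
Qed.
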